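(* Let $\mathbb{A}$ be an alphabet, let $WW'$ be an almost-square over $\mathbb{A}$ (with $W'$ either an extension of $W$ or obtained from $W$ by deleting one letter), and let $V$ be a word over $\mathbb{A}$ such that $WW'V=XX'$ where $XX'$ is an almost-square (with $X'$ either an extension of $X$ or obtained from $X$ by deleting one letter). If $4\leq |V|\leq \frac{1}{2}|W|$, then $XX'$ is not square-free.
   Context: Words are finite sequences of letters; $|U|$ denotes the length of $U$. An extension of a word $W$ over $\mathbb{A}$ is a word $W_1xW_2$ with $W=W_1W_2$ ($W_1,W_2$ possibly empty) and $x\in\mathbb{A}$. An almost-square is a word of the form $WW'$ where $W'$ is either an extension of $W$ or is obtained by deleting one letter from $W$. A square is a nonempty word of the form $YY$; a word is square-free if none of its factors (contiguous subwords) is a square. *)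

(* Defs.v *)
From mathcomp Require Import all_boot.
Set Implicit Arguments. Unset Strict Implicit. Unset Printing Implicit Defensive.

Definition extension {A : Type} (W W' : seq A) : Prop :=
  exists (W1 W2 : seq A) (x : A), W = W1 ++ W2 /\ W' = W1 ++ x :: W2.

Definition deletion {A : Type} (W W' : seq A) : Prop :=
  exists (W1 W2 : seq A) (x : A), W = W1 ++ x :: W2 /\ W' = W1 ++ W2.

Definition almost_square_pair {A : Type} (W W' : seq A) : Prop :=
  extension W W' \/ deletion W W'.

Definition square_free {A : Type} (U : seq A) : Prop :=
  forall (P Y S : seq A), Y <> [::] -> U <> P ++ (Y ++ Y) ++ S.

(* Main.v *)
Require Import Defs.
From mathcomp Require Import all_boot.
From mathcomp Require Import zify.

Definition seg {T : Type} (U : seq T) i l := take l (drop i U).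

Lemma aux_td {T : Type} (t : seq T) i l' l :
  i + l' <= l -> take l' (drop i (take l t)) = take l' (drop i t).
Proof.
elim: t i l' l => [|x t IH] [|i] l' [|l] //= H.
all: first [ by case: l' H
           | (case: l' H => [|l'] //= H; rewrite -(drop0 (take l t)) IH ?drop0 //; lia)
           | lia | (apply: IH; lia) ].
Qed.

Lemma seg_sub {T : Type} (U : seq T) lo len s lo' len' :
  seg U lo len = seg U (lo + s) len -> lo <= lo' -> lo' + len' <= lo + len ->
  seg U lo' len' = seg U (lo' + s) len'.
Proof.
move=> H h1 h2.
have E : forall k, seg U (lo + k + (lo' - lo)) len' =
            take len' (drop (lo' - lo) (seg U (lo + k) len)).
  move=> k. rewrite /seg aux_td; last by lia.
  by rewrite drop_drop addnC.
have E0 := E 0; have Es := E s. rewrite addn0 in E0. rewrite -H in Es.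
have -> : seg U lo' len' = seg U (lo + (lo' - lo)) len' by congr seg; lia.
by rewrite E0 -Es; congr seg; lia.
Qed.

Lemma square_seg {T : Type} (U : seq T) k p :
  0 < p -> k + 2 * p <= size U -> seg U k p = seg U (k + p) p -> ~ square_free U.
Proof.
move=> hp hs H sf.
apply: (sf (take k U) (seg U k p) (drop (k + 2 * p) U)).
  have : size (seg U k p) = p by rewrite size_take size_drop; case: ifP => //; lia.
  by move=> Hs Hn; rewrite Hn /= in Hs; lia.
rewrite {2}H /seg -!catA.
rewrite -{1}(cat_take_drop k U); congr (_ ++ _).
rewrite -{1}(cat_take_drop p (drop k U)); congr (_ ++ _).
rewrite drop_drop -{1}(cat_take_drop p (drop (p + k) U)); congr (_ ++ _).
  by rewrite addnC.
by rewrite drop_drop; congr drop; lia.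
Qed.

Lemma combine {T : Type} (U : seq T) l1 len1 s1 l2 len2 s2 lo :
  seg U l1 len1 = seg U (l1 + s1) len1 ->
  seg U l2 len2 = seg U (l2 + s2) len2 ->
  s1 < s2 -> l1 <= lo -> l2 <= lo -> lo + (s2 - s1) <= l1 + len1 ->
  lo + (s2 - s1) <= l2 + len2 -> lo + s2 + (s2 - s1) <= size U ->
  ~ square_free U.
Proof.
move=> H1 H2 hs a1 a2 b1 b2 c.
have E1 := @seg_sub _ U l1 len1 s1 lo (s2 - s1) H1 a1 b1.
have E2 := @seg_sub _ U l2 len2 s2 lo (s2 - s1) H2 a2 b2.
apply: (@square_seg _ U (lo + s1) (s2 - s1)); first lia.
  lia.
rewrite -E1 E2. congr seg. lia.
Qed.

Lemma asp_blocks {T : Type} (W W' R : seq T) :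
  almost_square_pair W W' ->
  exists a a' s,
    [/\ a <= a' <= size W,
        seg (W ++ W' ++ R) 0 a = seg (W ++ W' ++ R) (0 + size W) a,
        seg (W ++ W' ++ R) a' (size W - a') =
          seg (W ++ W' ++ R) (a' + s) (size W - a') &
        (a' = a /\ s = (size W).+1 /\ size W' = (size W).+1) \/
        (a' = a.+1 /\ s = (size W).-1 /\ size W' = (size W).-1 /\ 0 < size W)].
Proof.
have SM : forall (U P Q S : seq T) i l, U = P ++ Q ++ S -> i = size P -> l = size Q ->
    seg U i l = Q.
  move=> U P Q S i l -> -> ->. by rewrite /seg drop_size_cat // take_size_cat.
case=> [[W1 [W2 [x [-> ->]]]]|[W1 [W2 [x [-> ->]]]]].
- exists (size W1), (size W1), (size (W1 ++ W2)).+1.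
  split.
  + rewrite size_cat; lia.
  + rewrite (@SM _ [::] W1 (W2 ++ W1 ++ x :: W2 ++ R)) ?(@SM _ (W1 ++ W2) W1 (x :: W2 ++ R)) //;
      by rewrite ?size_cat //= -!catA.
  + rewrite (@SM _ W1 W2 (W1 ++ x :: W2 ++ R)) ?(@SM _ (W1 ++ W2 ++ W1 ++ [:: x]) W2 R) //;
      rewrite ?size_cat /= -?catA //=; try lia.
  + left; rewrite !size_cat /=; lia.
- exists (size W1), (size W1).+1, (size (W1 ++ x :: W2)).-1.
  split.
  + rewrite size_cat /=; lia.
  + rewrite (@SM _ [::] W1 (x :: W2 ++ W1 ++ W2 ++ R)) ?(@SM _ (W1 ++ x :: W2) W1 (W2 ++ R)) //;
      by rewrite ?size_cat //= -!catA.
  + rewrite (@SM _ (W1 ++ [:: x]) W2 (W1 ++ W2 ++ R)) ?(@SM _ (W1 ++ x :: W2 ++ W1) W2 R) //;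
      rewrite ?size_cat /= -?catA //=; try lia.
    by rewrite catA.
    rewrite size_cat; lia.
  + right; rewrite !size_cat /=; lia.
Qed.


Definition Dis (n m a a' b b' s t L : nat) : Prop :=
  (n < m /\ 0 <= 0 /\ 0 <= 0 /\ 0 + (m - n) <= 0 + a /\ 0 + (m - n) <= 0 + b /\ 0 + m + (m - n) <= L) \/
  (n < t /\ 0 <= b' /\ b' <= b' /\ b' + (t - n) <= 0 + a /\ b' + (t - n) <= b' + (m - b') /\ b' + t + (t - n) <= L) \/
  (s < m /\ a' <= a' /\ 0 <= a' /\ a' + (m - s) <= a' + (n - a') /\ a' + (m - s) <= 0 + b /\ a' + m + (m - s) <= L) \/
  (s < t /\ a' <= maxn a' b' /\ b' <= maxn a' b' /\ maxn a' b' + (t - s) <= a' + (n - a') /\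
     maxn a' b' + (t - s) <= b' + (m - b') /\ maxn a' b' + t + (t - s) <= L).

Lemma arith (n m v a a' b b' s t L w x : nat) :
  3 < v -> 2 * v <= n -> a <= a' <= n -> b <= b' <= m ->
  L = n + w + v -> L = m + x ->
  (a' = a /\ s = n.+1 /\ w = n.+1) \/ (a' = a.+1 /\ s = n.-1 /\ w = n.-1 /\ 0 < n) ->
  (b' = b /\ t = m.+1 /\ x = m.+1) \/ (b' = b.+1 /\ t = m.-1 /\ x = m.-1 /\ 0 < m) ->
  Dis n m a a' b b' s t L.
Proof.
rewrite /Dis => h1 h2 h3 h4 h5 h6 hw hx.
have [hA|hA] := boolP ((m - n <= a) && (m - n <= b)).
  left; case: hw => [[e1 [e2 e3]]|[e1 [e2 [e3 e4]]]]; case: hx => [[f1 [f2 f3]]|[f1 [f2 [f3 f4]]]]; subst; lia.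
have [hB|hB] := boolP (maxn a' b' + (t - s) <= n).
  right; right; right; case: hw => [[e1 [e2 e3]]|[e1 [e2 [e3 e4]]]]; case: hx => [[f1 [f2 f3]]|[f1 [f2 [f3 f4]]]]; subst; lia.
have [hC|hC] := boolP (b < m - n).
  right; left; case: hw => [[e1 [e2 e3]]|[e1 [e2 [e3 e4]]]]; case: hx => [[f1 [f2 f3]]|[f1 [f2 [f3 f4]]]]; subst; lia.
right; right; left; case: hw => [[e1 [e2 e3]]|[e1 [e2 [e3 e4]]]]; case: hx => [[f1 [f2 f3]]|[f1 [f2 [f3 f4]]]]; subst; lia.
Qed.

Theorem mainTheorem5 (A : Type) (W W' V X X' : seq A) :
  almost_square_pair W W' ->
  almost_square_pair X X' ->
  W ++ W' ++ V = X ++ X' ->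
  4 <= size V -> 2 * size V <= size W ->
  ~ square_free (X ++ X').
Proof.
move=> hW hX E h4 h2.
have [a [a' [s [ha HW1 HW2 HWk]]]] := @asp_blocks _ W W' V hW.
have [b [b' [t [hb HX1 HX2 HXk]]]] := @asp_blocks _ X X' [::] hX.
rewrite cats0 -E in HX1 HX2.
have hsz : size W + size W' + size V = size X + size X'.
  by rewrite -!size_cat -E catA.
rewrite -E.
set U := W ++ W' ++ V in HW1 HW2 HX1 HX2 *.
have sU : size U = size W + size W' + size V by rewrite /U !size_cat addnA.
set n := size W in HW1 HW2 ha HWk h2 hsz sU.
set m := size X in HX1 HX2 hb HXk hsz.
have D := @arith n m (size V) a a' b b' s t (size U) (size W') (size X') h4 h2 ha hb sU (etrans sU hsz) HWk HXk.
case: D => [C|[C|[C|C]]]; case: C => c1 [c2 [c3 [c4 [c5 c6]]]].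
- exact: (@combine _ U _ _ _ _ _ _ _ HW1 HX1 c1 c2 c3 c4 c5 c6).
- exact: (@combine _ U _ _ _ _ _ _ _ HW1 HX2 c1 c2 c3 c4 c5 c6).
- exact: (@combine _ U _ _ _ _ _ _ _ HW2 HX1 c1 c2 c3 c4 c5 c6).
- exact: (@combine _ U _ _ _ _ _ _ _ HW2 HX2 c1 c2 c3 c4 c5 c6).
Qed.
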